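(* Let $P[1..m]$ and $S[1..m]$ be strings of the same length $m$ over a totally ordered alphabet. Then $CT(P)=CT(S)$ if and only if $S[\mathcal{GP}_P(i)]\preceq S[i]$ for all $1\le i\le m$.
   Context: A string $S$ is a finite sequence $S[1],S[2],\dots$ over an alphabet $\Sigma$ with a total order $<$; $S[i..j]$ denotes the substring $S[i]\cdots S[j]$ (empty if $i>j$). For positions $i,j$ of $S$, write $S[i]\prec S[j]$ iff either $S[i]<S[j]$, or $S[i]$ and $S[j]$ have the same value and $i<j$; write $S[i]\preceq S[j]$ iff $S[i]\prec S[j]$ or $i=j$. Minimum elements are taken with respect to $\prec$ (leftmost among equal minimal values). Cartesian tree $CT(S)$ of $S[1..n]$: if $S$ is empty, $CT(S)$ is the empty tree; otherwise, if $S[i]$ is the minimum of $S$, $CT(S)$ is the binary tree with root $S[i]$, left subtree $CT(S[1..i-1])$ and right subtree $CT(S[i+1..n])$. Two Cartesian trees are equal when they are equal as (unlabeled, ordered) binary tree shapes. Prefix-parent representation: $\mathcal{PP}_S(i)=\max\{j: 1\le j<i,\ S[j]\prec S[i]\}$ if such $j$ exists, and $\mathcal{PP}_S(i)=i$ otherwise. Prefix-child representation: $\mathcal{PC}_S(1)=1$, and for $i\ge 2$: if $\mathcal{PP}_S(i)=i$, then $\mathcal{PC}_S(i)$ is the index $j\in[1,i-1]$ such that $S[j]$ is the minimum of $S[1..i-1]$; if $\mathcal{PP}_S(i)=i-1$, then $\mathcal{PC}_S(i)=i$; if $\mathcal{PP}_S(i)<i-1$, then $\mathcal{PC}_S(i)$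 is the index $j$ with $\mathcal{PP}_S(i)<j<i$ such that $S[j]$ is the minimum of $S[\mathcal{PP}_S(i)+1..i-1]$. Global-parent representation: $\mathcal{GP}_S(i)=j$ if there is an index $j>i$ with $\mathcal{PC}_S(j)=i$ (there is at most one such $j$), and $\mathcal{GP}_S(i)=\mathcal{PP}_S(i)$ otherwise. *)

(* Defs.v *)
(* Strings over a totally ordered alphabet T : orderType d
   are represented as functions S : nat -> T, of which only the positions
   1..m (1-based, as in the paper) are relevant. *)
From mathcomp Require Import all_boot all_order.
Set Implicit Arguments. Unset Strict Implicit. Unset Printing Implicit Defensive.
Import Order.TTheory.
Local Open Scope order_scope.

Section Defs.
Context {d : Order.disp_t} {T : orderType d}.

Definition prec (S : nat -> T) (i j : nat) : bool :=
  (S i < S j) || ((S i == S j) && (i < j)%N).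

Definition preceq (S : nat -> T) (i j : nat) : bool :=
  prec S i j || (i == j).

(* index of the minimum (w.r.t. ≺) of S[lo .. lo+n-1]; lo if n = 0 *)
Definition argmin (S : nat -> T) (lo n : nat) : nat :=
  foldl (fun cur k => if prec S k cur then k else cur) lo (iota lo n).

Inductive tree : Type := Leaf | Node of tree & tree.

Fixpoint ct_fuel (fuel : nat) (S : nat -> T) (lo n : nat) : tree :=
  match fuel with
  | 0 => Leaf
  | fuel'.+1 =>
      if n is 0 then Leaf else
      let i := argmin S lo n in
      Node (ct_fuel fuel' S lo (i - lo)) (ct_fuel fuel' S i.+1 (lo + n - i.+1))
  end.

Definition CT (S : nat -> T) (m : nat) : tree := ct_fuel m S 1 m.

(* prefix-parent: max {j : 1 <= j < i, S[j] ≺ S[i]}, or i if none *)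
Definition PP (S : nat -> T) (i : nat) : nat :=
  foldl (fun acc j => if prec S j i then j else acc) i (iota 1 i.-1).

Definition PC (S : nat -> T) (i : nat) : nat :=
  if i == 1 then 1 else
  let p := PP S i in
  if p == i then argmin S 1 i.-1
  else if p == i.-1 then i
  else argmin S p.+1 (i.-1 - p).

Definition GP (S : nat -> T) (m i : nat) : nat :=
  let js := [seq j <- iota i.+1 (m - i) | PC S j == i] in
  if js is j :: _ then j else PP S i.

End Defs.

(* Main.v *)
Require Import Defs.
From mathcomp Require Import all_boot all_order zify.
Set Implicit Arguments. Unset Strict Implicit. Unset Printing Implicit Defensive.
Import Order.TTheory.

Section Basics.
Variables (d : Order.disp_t) (T : orderType d).
Implicit Types X : nat -> T.

Lemma precxx X i : prec X i i = false.
Proof. by rewrite /prec ltxx eqxx ltnn. Qed.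

Lemma prec_trans X i j k : prec X i j -> prec X j k -> prec X i k.
Proof.
rewrite /prec => /orP[h1|/andP[/eqP e1 h1]] /orP[h2|/andP[/eqP e2 h2]].
- by rewrite (lt_trans h1 h2).
- by rewrite -e2 h1.
- by rewrite e1 h2.
- by rewrite e1 e2 eqxx (ltn_trans h1 h2) orbT.
Qed.

Lemma prec_asym X i j : prec X i j -> prec X j i -> False.
Proof. by move=> h1 h2; move: (prec_trans h1 h2); rewrite precxx. Qed.

Lemma prec_total X i j : i != j -> prec X i j || prec X j i.
Proof.
move=> ne; rewrite /prec; case: (ltgtP (X i) (X j)) => //= e.
rewrite ?e ?eqxx /=; lia.
Qed.

Lemma notprec X i j : ~~ prec X j i -> preceq X i j.
Proof.
case: (eqVneq i j) => [->|ne] h; first by rewrite /preceq eqxx orbT.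
by move: (prec_total X ne); rewrite (negbTE h) orbF /preceq => ->.
Qed.

Lemma preceqP X i j : preceq X i j -> prec X i j \/ i = j.
Proof. by rewrite /preceq => /orP[->|/eqP ->]; [left|right]. Qed.

Lemma preceqxx X i : preceq X i i.
Proof. by rewrite /preceq eqxx orbT. Qed.

Lemma prec_preceq X i j : prec X i j -> preceq X i j.
Proof. by rewrite /preceq => ->. Qed.

Lemma preceq_neq X i j : preceq X i j -> i != j -> prec X i j.
Proof. by case/preceqP => [//|->]; rewrite eqxx. Qed.

Lemma preceq_prec_trans X i j k : preceq X i j -> prec X j k -> prec X i k.
Proof. by case/preceqP => [h1 h2|->//]; apply: prec_trans h1 h2. Qed.

Lemma prec_preceq_trans X i j k : prec X i j -> preceq X j k -> prec X i k.
Proof. by move=> h1 /preceqP [h2|<-//]; apply: prec_trans h1 h2. Qed.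

Lemma preceq_trans X i j k : preceq X i j -> preceq X j k -> preceq X i k.
Proof. by move=> /preceqP[h1|->//] h2; apply/prec_preceq/(prec_preceq_trans h1 h2). Qed.

Lemma preceq_prec_False X i j : preceq X i j -> prec X j i -> False.
Proof. by case/preceqP => [h1 h2|->]; [apply: prec_asym h1 h2|rewrite precxx]. Qed.

Lemma preceq_antisym X i j : preceq X i j -> preceq X j i -> i = j.
Proof.
move=> /preceqP[h1|//] /preceqP[h2|//]; by case: (prec_asym h1 h2).
Qed.

Lemma foldl_argmin X c a n :
  let r := foldl (fun cur k => if prec X k cur then k else cur) c (iota a n) in
  (r = c \/ a <= r < a + n) /\ preceq X r c /\
  (forall k, a <= k < a + n -> preceq X r k).
Proof.
elim: n a c => [|n IH] a c /=.
  by split; [left|split; [apply: preceqxx|move=> k; lia]].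
set c' := if prec X a c then a else c.
have hc' : preceq X c' c /\ preceq X c' a.
  rewrite /c'; case: ifP => h; first by split; [apply: prec_preceq|apply: preceqxx].
  by split; [apply: preceqxx|apply: notprec; rewrite h].
have [h1 [h2 h3]] := IH a.+1 c'.
split; last split.
- case: h1 => [->|?]; last by right; lia.
  rewrite /c'; case: ifP => _; [right; lia|by left].
- exact: preceq_trans h2 hc'.1.
- move=> k hk; case: (eqVneq k a) => [->|ne]; first exact: preceq_trans h2 hc'.2.
  apply: h3; lia.
Qed.

Lemma argmin0 X a : argmin X a 0 = a.
Proof. by []. Qed.

Lemma argmin_spec X lo n : 0 < n ->
  lo <= argmin X lo n < lo + n /\
  forall k, lo <= k < lo + n -> preceq X (argmin X lo n) k.
Proof.
move=> n0; have [h1 [_ h3]] := foldl_argmin X lo lo n.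
split; last exact: h3.
rewrite /argmin; case: h1 => [->|//]; lia.
Qed.

Lemma argmin_uniq X lo n i : lo <= i < lo + n ->
  (forall k, lo <= k < lo + n -> preceq X i k) -> argmin X lo n = i.
Proof.
move=> hi hk; have [h1 h2] := argmin_spec X (n:=n) lo ltac:(lia).
apply: preceq_antisym; [exact: h2|exact: hk].
Qed.

Lemma foldl_PP X i acc a n :
  let r := foldl (fun acc j => if prec X j i then j else acc) acc (iota a n) in
  (r = acc /\ forall k, a <= k < a + n -> ~~ prec X k i) \/
  (a <= r < a + n /\ prec X r i /\ forall k, r < k < a + n -> ~~ prec X k i).
Proof.
elim: n a acc => [|n IH] a acc /=.
  by left; split=> // k; lia.
case: (IH a.+1 (if prec X a i then a else acc)) => [[-> h]|[h1 [h2 h3]]].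
- case: ifP => ha.
  + right; split; first lia. split=> // k hk; apply: h; lia.
  + left; split=> // k hk; case: (eqVneq k a) => [->|ne]; first by rewrite ha.
    apply: h; lia.
- right; split; first lia. split=> // k hk; apply: h3; lia.
Qed.

Lemma PP_spec X i :
  (PP X i = i /\ forall k, 1 <= k < i -> ~~ prec X k i) \/
  (1 <= PP X i < i /\ prec X (PP X i) i /\ forall k, PP X i < k < i -> ~~ prec X k i).
Proof.
rewrite /PP; case: (foldl_PP X i i 1 i.-1) => [[-> h]|[h1 [h2 h3]]].
- left; split=> // k hk; apply: h; lia.
- right; split; first lia. split=> // k hk; apply: h3; lia.
Qed.

Lemma PP_le X i : PP X i <= i.
Proof. case: (PP_spec X i) => [[-> _]|[h _]]; lia. Qed.

Lemma PP_self X i : (forall k, 1 <= k < i -> ~~ prec X k i) -> PP X i = i.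
Proof.
move=> h; case: (PP_spec X i) => [[-> _]//|[h1 [h2 _]]].
by move: (h _ h1); rewrite h2.
Qed.

Lemma PP_eq X i p : 1 <= p < i -> prec X p i ->
  (forall k, p < k < i -> ~~ prec X k i) -> PP X i = p.
Proof.
move=> hp hpi h; case: (PP_spec X i) => [[_ h']|[h1 [h2 h3]]].
  by move: (h' _ hp); rewrite hpi.
case: (ltngtP (PP X i) p) => // c.
- by move: (h3 p ltac:(lia)); rewrite hpi.
- by move: (h (PP X i) ltac:(lia)); rewrite h2.
Qed.

End Basics.

Section GPs.
Variables (d : Order.disp_t) (T : orderType d).
Implicit Types X : nat -> T.

Lemma PC_left X j x : 1 <= x < j -> PC X j = x ->
  [/\ prec X j x, forall k, x < k < j -> prec X x k &
      forall i, 1 <= i < x -> prec X i x -> exists2 k, i <= k < x & prec X k j].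
Proof.
move=> hx; rewrite /PC ifN; last by apply/eqP; lia.
case: (PP_spec X j) => [[hPP hnone]|[hr [hp hnone]]].
- rewrite hPP eqxx => hxe.
  have [hr hall] := argmin_spec X 1 (n:=j.-1) ltac:(lia).
  rewrite hxe in hr hall.
  split.
  + apply: preceq_neq; last by apply/eqP; lia.
    apply: notprec; apply: hnone; lia.
  + move=> k hk; apply: preceq_neq; [apply: hall; lia|apply/eqP; lia].
  + move=> i hi hix; case: (preceq_prec_False (hall i ltac:(lia)) hix).
- rewrite ifN; last by apply/eqP; lia.
  case: ifP => [_ E|/eqP hne hxe]; first lia.
  set p := PP X j in hr hp hnone hne hxe.
  have [hr' hall] := argmin_spec X p.+1 (n:=j.-1 - p) ltac:(lia).
  rewrite hxe in hr' hall.
  split.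
  + apply: preceq_neq; last by apply/eqP; lia.
    apply: notprec; apply: hnone; lia.
  + move=> k hk; apply: preceq_neq; [apply: hall; lia|apply/eqP; lia].
  + move=> i hi hix; case: (leqP i p) => hip.
      by exists p => //; lia.
    case: (preceq_prec_False (hall i ltac:(lia)) hix).
Qed.

Lemma first_below X x j : x < j -> prec X j x ->
  exists R, [/\ x < R <= j, prec X R x & forall k, x < k < R -> ~~ prec X k x].
Proof.
move=> hj hp.
have ex : exists n, (x < n) && prec X n x by exists j; rewrite hj hp.
case: (ex_minnP ex) => R /andP[h1 h2] hmin.
exists R; split=> //.
- by rewrite h1 /=; apply: hmin; rewrite hj hp.
- move=> k hk; apply/negP => hkx.
  have := hmin k; rewrite hkx andbT; lia.
Qed.

Lemma PP_parent X m x : 1 <= x <= m ->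
  (forall j, x < j <= m -> PC X j != x) ->
  (PP X x = x -> forall j, 1 <= j <= m -> preceq X x j) /\
  (PP X x <> x -> [/\ 1 <= PP X x < x, prec X (PP X x) x,
     forall k, PP X x < k < x -> prec X x k &
     forall j, x < j <= m -> prec X j x -> exists2 k, x < k <= j & prec X k (PP X x)]).
Proof.
move=> hx hnoPC; split.
- move=> hPP j hj.
  have hlow : forall k, 1 <= k < x -> preceq X x k.
    move=> k hk; apply: notprec.
    case: (PP_spec X x) => [[_ h]|[h _]]; [exact: h|lia].
  case: (ltngtP j x) => c; [apply: hlow; lia| |by rewrite c; apply: preceqxx].
  apply: notprec; apply/negP => hjx.
  have [R [hR hRx hRmin]] := first_below c hjx.
  have F : forall k, 1 <= k < R -> preceq X x k.
    move=> k hk; case: (ltngtP k x) => c'; [apply: hlow; lia| |by rewrite c'; apply: preceqxx].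
    apply: notprec; apply: hRmin; lia.
  have hPPR : PP X R = R.
    apply: PP_self => k hk; apply/negP => hkR.
    exact: preceq_prec_False (F k hk) (prec_trans hkR hRx).
  have : PC X R = x.
    rewrite /PC ifN; last by apply/eqP; lia.
    rewrite hPPR eqxx; apply: argmin_uniq; first lia.
    move=> k hk; apply: F; lia.
  by move/eqP; apply/negP; apply: hnoPC; lia.
- move=> hne.
  case: (PP_spec X x) => [[//]|[hr [hp hnone]]].
  set p := PP X x in hne hr hp hnone *.
  split=> //.
  + move=> k hk; apply: preceq_neq; [apply: notprec; exact: hnone|apply/eqP; lia].
  + move=> j hj hjx.
    have [R [hR hRx hRmin]] := first_below (proj1 (andP hj)) hjx.
    exists R; first lia.
    apply/negPn/negP => hnR.
    have hpR : prec X p R := preceq_neq (notprec hnR) ltac:(apply/eqP; lia).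
    have F : forall k, p < k < R -> preceq X x k.
      move=> k hk; case: (ltngtP k x) => c'.
      * apply/notprec/hnone; lia.
      * apply: notprec; apply: hRmin; lia.
      * by rewrite c'; apply: preceqxx.
    have hPPR : PP X R = p.
      apply: PP_eq => //; first lia.
      move=> k hk; apply/negP => hkR.
      exact: preceq_prec_False (F k hk) (prec_trans hkR hRx).
    have : PC X R = x.
      rewrite /PC ifN; last by apply/eqP; lia.
      rewrite hPPR ifN; last by apply/eqP; lia.
      rewrite ifN; last by apply/eqP; lia.
      apply: argmin_uniq; first lia.
      move=> k hk; apply: F; lia.
    by move/eqP; apply/negP; apply: hnoPC; lia.
Qed.

Lemma GP_cases X m x : 1 <= x <= m ->
  (exists2 j, x < j <= m & PC X j = x /\ GP X m x = j) \/
  ((forall j, x < j <= m -> PC X j != x) /\ GP X m x = PP X x).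
Proof.
move=> hx; rewrite /GP.
case E: [seq j <- iota x.+1 (m - x) | PC X j == x] => [|j js].
- right; split=> // j hj; apply/negP => hPC.
  have : j \in [seq j <- iota x.+1 (m - x) | PC X j == x].
    by rewrite mem_filter hPC mem_iota; apply/andP; split; lia.
  by rewrite E.
- left; have : j \in [seq j <- iota x.+1 (m - x) | PC X j == x] by rewrite E mem_head.
  rewrite mem_filter mem_iota => /andP[/eqP hPC hj].
  exists j; first lia. by [].
Qed.

Lemma G0 X m x : 1 <= x <= m -> GP X m x = x ->
  forall j, 1 <= j <= m -> preceq X x j.
Proof.
move=> hx; case: (GP_cases X hx) => [[j hj [_ ->]]|[h ->]]; first lia.
exact: (proj1 (PP_parent hx h)).
Qed.

Lemma G1 X m x : 1 <= x <= m -> GP X m x <> x ->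
  [/\ 1 <= GP X m x <= m, prec X (GP X m x) x &
      forall k, (x < k < GP X m x) || (GP X m x < k < x) -> prec X x k].
Proof.
move=> hx; case: (GP_cases X hx) => [[j hj [hPC ->]]|[h ->]] hne.
- have [h1 h2 _] := PC_left (ltac:(lia) : 1 <= x < j) hPC.
  split=> //; first lia.
  move=> k /orP[hk|hk]; [exact: h2|lia].
- have [h1 h2 h3 _] := (proj2 (PP_parent hx h)) hne.
  split=> //; first lia.
  move=> k /orP[hk|hk]; [lia|exact: h3].
Qed.

Lemma G2 X m x : 1 <= x <= m -> GP X m x < x ->
  forall j, x < j <= m -> prec X j x -> exists2 k, x < k <= j & prec X k (GP X m x).
Proof.
move=> hx; case: (GP_cases X hx) => [[j hj [hPC ->]]|[h ->]] hlt; first lia.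
have [_ _ _ h4] := (proj2 (PP_parent hx h)) ltac:(lia).
exact: h4.
Qed.

Lemma G3 X m x : 1 <= x <= m -> x < GP X m x ->
  forall i, 1 <= i < x -> prec X i x -> exists2 k, i <= k < x & prec X k (GP X m x).
Proof.
move=> hx; case: (GP_cases X hx) => [[j hj [hPC ->]]|[h ->]] hlt.
- have [_ _ h3] := PC_left (ltac:(lia) : 1 <= x < j) hPC; exact: h3.
- have := PP_le X x; lia.
Qed.

End GPs.

Fixpoint tsize (t : tree) : nat :=
  match t with Leaf => 0 | Node l r => (tsize l + tsize r).+1 end.

Section Main.
Variables (d : Order.disp_t) (T : orderType d).
Implicit Types X : nat -> T.

Lemma ct_size X f lo n : n <= f -> tsize (ct_fuel f X lo n) = n.
Proof.
elim: f lo n => [|f IH] lo n hn /=; first lia.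
case: n hn => [//|n] hn /=.
have [hr _] := argmin_spec X lo (n:=n.+1) ltac:(lia).
rewrite !IH; lia.
Qed.

Lemma ct_rmq (P S : nat -> T) f lo n : n <= f ->
  ct_fuel f P lo n = ct_fuel f S lo n ->
  forall a k, lo <= a -> a + k <= lo + n -> argmin P a k = argmin S a k.
Proof.
elim: f lo n => [|f IH] lo n hn E a k ha hk.
  by have -> : k = 0 by lia.
case: k hk => [//|k] hk.
case: n hn E hk => [|n] hn E hk; first lia.
move: E => /=.
have [hrP hallP] := argmin_spec P lo (n:=n.+1) ltac:(lia).
have [hrS hallS] := argmin_spec S lo (n:=n.+1) ltac:(lia).
set rP := argmin P lo n.+1 in hrP hallP *.
set rS := argmin S lo n.+1 in hrS hallS *.
case=> EL ER.
have erS : rS = rP.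
  have := congr1 tsize EL; rewrite !ct_size; lia.
rewrite erS in EL ER hallS.
case: (leqP (a + k.+1) rP) => h1.
  apply: (IH lo (rP - lo)) => //; lia.
case: (ltnP rP a) => h2.
  apply: (IH rP.+1 (lo + n.+1 - rP.+1)) => //; lia.
rewrite (argmin_uniq (X:=P) (i:=rP)); last first.
  by move=> j hj; apply: hallP; lia.
  lia.
rewrite (argmin_uniq (X:=S) (i:=rP)) //; last first.
  by move=> j hj; apply: hallS; lia.
lia.
Qed.

Definition Bnd (P : nat -> T) m lo n :=
  [/\ 1 <= lo, lo + n <= m.+1,
      2 <= lo -> forall j, lo <= j < lo + n -> prec P lo.-1 j &
      lo + n <= m -> forall j, lo <= j < lo + n -> prec P (lo + n) j].

Lemma count_le (a b : pred nat) s :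
  (forall z, z \in s -> a z -> b z) -> count a s <= count b s.
Proof.
elim: s => //= z s IH H.
have H' : forall y, y \in s -> a y -> b y by move=> y ys; apply: H; rewrite in_cons ys orbT.
have := IH H'; have := H z (mem_head _ _).
case: (a z); case: (b z) => //=; try lia; by move=> /(_ isT).
Qed.

Lemma count_lt (a b : pred nat) s y :
  (forall z, z \in s -> a z -> b z) -> y \in s -> b y -> ~~ a y ->
  count a s < count b s.
Proof.
elim: s => //= z s IH H.
have H' : forall y, y \in s -> a y -> b y by move=> y' ys; apply: H; rewrite in_cons ys orbT.
rewrite in_cons => /orP[/eqP ->|ys] hb ha.
- rewrite hb (negbTE ha) /=; have := count_le H'; lia.
- have := IH H' ys hb ha; have := H z (mem_head _ _).
  case: (a z); case: (b z) => //=; try lia; by move=> /(_ isT).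
Qed.

Lemma heap_min (P S : nat -> T) m lo n :
  (forall i, 1 <= i <= m -> preceq S (GP P m i) i) ->
  Bnd P m lo n -> 0 < n ->
  forall x, lo <= x < lo + n -> preceq S (argmin P lo n) x.
Proof.
move=> heap [hlo hhi hL hR] n0.
have [hr hall] := argmin_spec P lo n0.
set r := argmin P lo n in hr hall *.
pose c x := count (fun j => prec P j x) (iota 1 m).
suff H : forall N x, c x < N -> lo <= x < lo + n -> preceq S r x.
  by move=> x hx; apply: (H (c x).+1).
elim=> [|N IH] x hN hx; first lia.
case: (eqVneq x r) => [->|hxr]; first exact: preceqxx.
have hrx : prec P r x := preceq_neq (hall x hx) (ltac:(apply/eqP; lia)).
have hx1 : 1 <= x <= m by lia.
case: (eqVneq (GP P m x) x) => [hg|hg].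
  have := G0 hx1 hg (ltac:(lia) : 1 <= r <= m).
  by move/preceq_prec_False/(_ hrx).
have [hgm hgx hbtw] := G1 hx1 (elimN eqP hg).
set g := GP P m x in hg hgm hgx hbtw.
have hgI : lo <= g < lo + n.
  case: (ltngtP g x) => cgx; last by move: hg; rewrite cgx eqxx.
  - case: (leqP lo g) => cl; first lia.
    have hbl := hL ltac:(lia) x hx.
    case: (ltngtP g lo.-1) => cg.
    + have := hbtw lo.-1 ltac:(apply/orP; right; lia).
      by move/(prec_asym hbl).
    + lia.
    + case: (ltngtP r x) => crx.
      * have := hbtw r ltac:(apply/orP; right; lia).
        by move/(prec_asym hrx).
      * have [k hk hkg] := G2 hx1 cgx (ltac:(lia) : x < r <= m) hrx.
        have := hL ltac:(lia) k ltac:(lia); rewrite -cg.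
        by move/(prec_asym hkg).
      * lia.
  - case: (ltnP g (lo + n)) => cl; first lia.
    have hbl := hR ltac:(lia) x hx.
    case: (ltngtP g (lo + n)) => cg.
    + lia.
    + have := hbtw (lo + n) ltac:(apply/orP; left; lia).
      by move/(prec_asym hbl).
    + case: (ltngtP r x) => crx.
      * have [k hk hkg] := G3 hx1 cgx (ltac:(lia) : 1 <= r < x) hrx.
        have := hR ltac:(lia) k ltac:(lia); rewrite -cg.
        by move/(prec_asym hkg).
      * have := hbtw r ltac:(apply/orP; left; lia).
        by move/(prec_asym hrx).
      * lia.
have hcg : c g < c x.
  apply: (count_lt (y:=g)).
  - by move=> z _ hz; apply: prec_trans hz hgx.
  - by rewrite mem_iota; lia.
  - exact: hgx.
  - by rewrite precxx.
apply: preceq_trans (IH g ltac:(lia) hgI) (heap x hx1).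
Qed.

Lemma heap_ct (P S : nat -> T) m f lo n :
  (forall i, 1 <= i <= m -> preceq S (GP P m i) i) ->
  n <= f -> Bnd P m lo n -> ct_fuel f P lo n = ct_fuel f S lo n.
Proof.
move=> heap; elim: f lo n => [|f IH] lo n hn hB //=.
case: n hn hB => [//|n] hn hB.
have [hr hall] := argmin_spec P lo (n:=n.+1) ltac:(lia).
have eS : argmin S lo n.+1 = argmin P lo n.+1.
  apply: argmin_uniq; first lia.
  exact: heap_min heap hB _.
rewrite eS.
set r := argmin P lo n.+1 in hr hall eS *.
case: hB => [hlo hhi hL hR].
have prr : forall j, lo <= j < lo + n.+1 -> j != r -> prec P r j.
  by move=> j hj hne; apply: preceq_neq; [apply: hall|rewrite eq_sym].
congr Node; apply: IH; try lia.
- split=> //; first lia.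
  + move=> h2 j hj; apply: hL => //; lia.
  + move=> _ j hj; have -> : lo + (r - lo) = r by lia.
    apply: prr; [lia|apply/eqP; lia].
- split=> //; try lia.
  + move=> _ j hj; have -> : r.+1.-1 = r by [].
    apply: prr; [lia|apply/eqP; lia].
  + move=> h j hj; have -> : r.+1 + (lo + n.+1 - r.+1) = lo + n.+1 by lia.
    apply: hR; lia.
Qed.

End Main.

Theorem theorem3 (d : Order.disp_t) (T : orderType d) (m : nat)
    (P S : nat -> T) :
  CT P m = CT S m <->
  (forall i : nat, (1 <= i <= m)%N -> preceq S (GP P m i) i).
Proof.
split.
- move=> E i hi.
  have rmq := ct_rmq (leqnn m) E.
  case: (eqVneq (GP P m i) i) => [->|hg]; first exact: preceqxx.
  have [hgm hgx hbtw] := G1 hi (elimN eqP hg).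
  set g := GP P m i in hg hgm hgx hbtw *.
  set a := minn g i. set n := (maxn g i - a).+1.
  have hgmin : argmin P a n = g.
    apply: argmin_uniq; first lia.
    move=> k hk; case: (eqVneq k g) => [->|hkg]; first exact: preceqxx.
    apply: prec_preceq; case: (eqVneq k i) => [->//|hki].
    apply: prec_trans hgx (hbtw k _); apply/orP; lia.
  have := rmq a n ltac:(lia) ltac:(lia).
  rewrite hgmin => eS.
  have [_ hall] := argmin_spec S a (n:=n) ltac:(lia).
  rewrite -eS in hall; apply: hall; lia.
- move=> heap; apply: heap_ct heap (leqnn m) _.
  split=> //; lia.
Qed.
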